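(* Assume Assumptions 1, 2, 3 (stated in the context). If Line-Search (Algorithm 3, described in the context), called with input point $\theta$, makes infinitely many calls to subdivision, then $\theta$ is unsafe; in other words, $\theta$ cannot pass the safety check (Algorithm 2) under any finite spatial-temporal subdivision.
   Context: Problem: for $\theta$ and $t\in[0,T]$, body $i$ occupies $b_i(t,\theta)\subset\mathbb{R}^3$, obstacles occupy $o$; $\text{dist}$ is the shortest Euclidean distance between sets; $d_0\ge0$; $\mathcal{O}(\theta)$ twice differentiable cost. Assumption 1: finite decompositions $b_i=\bigcup_j b_{ij}$, $o=\bigcup_k o_k$ with each $(t,\theta)\mapsto\text{dist}(b_{ij}(t,\theta),o_k)$ sufficiently smooth. Assumption 2: the feasible domain of $t,\theta$ is bounded. Assumption 3: $\mathcal{P}$ sufficiently smooth, monotonically decreasing on $(0,\infty)$, $\lim_{x\to0}\mathcal{P}=\infty$, $\lim_{x\to\infty}\mathcal{P}=0$, $\lim_{x\to0}x\mathcal{P}(x)=\infty$. $L_1$: a constant with $|\text{dist}(b_{ij}(t_1,\theta),o_k)-\text{dist}(b_{ij}(t_2,\theta),o_k)|\le L_1|t_1-t_2|$ for all arguments. $\mathcal{P}_{ijk}(t,\theta)=\mathcal{P}(\text{dist}(b_{ij}(t,\theta),o_k)-d_0)$; per triple $(i,j,k)$ a finite partition of $[0,T]$ into intervals $[T_0^l,T_1^l]$; subdividing $(i,j,k,l)$ replaces the interval by its two halves; $\mathcal{P}_{ijkl}(\theta)=\mathcal{P}_{ijk}((T_0^l+T_1^l)/2,\theta)$; $\mathcal{E}=\mathcal{O}+\mu\sum_{ijkl}(T_1^l-T_0^l)\mathcal{P}_{ijkl}$,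 $\mu>0$. Directions $d^{(1)}=-\nabla_\theta\mathcal{E}$ or $d^{(2)}=\mathcal{M}(\nabla^2_\theta\mathcal{E})^{-1}d^{(1)}$ with $\underline\beta I\preceq\mathcal{M}(H)\preceq\bar\beta I$. Wolfe: $\mathcal{E}(\theta+d\alpha)\le\mathcal{E}(\theta)+c\langle d\alpha,\nabla\mathcal{E}\rangle$, $c\in(0,1)$. Safety check (Algorithm 2) at $\theta$: $\psi(x)=L_1x/2+L_2x^\eta$ ($L_2,\eta>0$); return a tuple $(i,j,k,l)$ with $\text{dist}(b_{ij}((T_0^l+T_1^l)/2,\theta),o_k)\le d_0+\psi(T_1^l-T_0^l)$ if one exists, else None (then $\theta$ passes / is safe; otherwise unsafe). Line-Search$(\theta,d,\epsilon_\alpha)$ (Algorithm 3; $\alpha_0>0,\gamma\in(0,1)$): $\alpha=\alpha_0$; while $\theta+d\alpha$ fails the safety check or Wolfe: if the check returned $(i,j,k,l)$, then if $\alpha\le\epsilon_\alpha$: $\epsilon_\alpha\leftarrow\gamma\epsilon_\alpha$, subdivide $(i,j,k,l)$, re-evaluate $\mathcal{E}$, recompute $d$; else $\alpha\leftarrow\gamma\alpha$; if only Wolfe fails, $\alpha\leftarrow\gamma\alpha$. Return $\alpha,\epsilon_\alpha$. *)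

(* Defs.v *)
From HB Require Import structures.
From mathcomp Require Import all_boot all_order all_algebra.
From mathcomp Require Import all_classical all_reals all_analysis.
Import Order.TTheory GRing.Theory Num.Theory.
Import numFieldNormedType.Exports.

Set Implicit Arguments.
Unset Strict Implicit.
Unset Printing Implicit Defensive.

Local Open Scope classical_set_scope.
Local Open Scope ring_scope.

Section Defs.
Variable R : realType.

Definition eucl3 (x : 'rV[R]_3) : R := Num.sqrt (\sum_i x 0 i ^+ 2).

Definition setdist (A B : set 'rV[R]_3) : R :=
  inf [set r | exists x y, A x /\ B y /\ r = eucl3 (x - y)].

Definition iterD (V : normedModType R) (f : V -> R) (us : seq V) : V -> R :=
  foldr (fun u g => 'D_u g) f us.

(* "sufficiently smooth": C^infinity, i.e. all iterated directional
   derivatives exist everywhere and are continuous *)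
Definition smooth (V : normedModType R) (f : V -> R) : Prop :=
  forall us : seq V,
    continuous (iterD f us) /\ (forall u x, derivable (iterD f us) x u).

Definition smooth_pos (f : R -> R) : Prop :=
  forall (m : nat) (x : R), 0 < x ->
    derivable (derive1n m f) x 1 /\ {for x, continuous (derive1n m f)}.

Definition twice_diff (n : nat) (f : 'cV[R]_n -> R) : Prop :=
  forall (u v x : 'cV[R]_n), derivable f x u /\ derivable ('D_u f) x v.

Definition grad (n : nat) (f : 'cV[R]_n -> R) (x : 'cV[R]_n) : 'cV[R]_n :=
  \col_i 'D_(delta_mx i 0) f x.

Definition hess (n : nat) (f : 'cV[R]_n -> R) (x : 'cV[R]_n) : 'M[R]_n :=
  \matrix_(i, j) 'D_(delta_mx j 0) (fun y => 'D_(delta_mx i 0) f y) x.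

Definition inner (n : nat) (u v : 'cV[R]_n) : R := \sum_i u i 0 * v i 0.

Definition loewner_bounded (n : nat) (lo hi : R) (M : 'M[R]_n -> 'M[R]_n) :=
  forall H : 'M[R]_n, (M H)^T = M H /\
    forall x : 'cV[R]_n,
      lo * inner x x <= inner x (M H *m x) <= hi * inner x x.

Definition mid (iv : R * R) : R := (iv.1 + iv.2) / 2.
Definition width (iv : R * R) : R := iv.2 - iv.1.

(* s = [:: [T_0^0,T_1^0]; ...; [T_0^m,T_1^m]] is a finite partition of [0,T] *)
Definition is_partition (T : R) (s : seq (R * R)) : Prop :=
  [/\ s != [::],
      (head (0, 0) s).1 = 0,
      (last (0, 0) s).2 = T,
      (forall l, (l < size s)%N -> (nth (0, 0) s l).1 < (nth (0, 0) s l).2)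
    & (forall l, (l.+1 < size s)%N -> (nth (0, 0) s l).2 = (nth (0, 0) s l.+1).1)].

Definition split_interval (l : nat) (s : seq (R * R)) : seq (R * R) :=
  let iv := nth (0, 0) s l in
  take l s ++ [:: (iv.1, mid iv); (mid iv, iv.2)] ++ drop l.+1 s.

Section Pieces.
(* Pc : the body pieces b_{ij} (indexed by pairs (i,j)), K : obstacle pieces o_k *)
Variables (Pc K : finType) (n : nat).

(* a subdivision: for each triple (i,j,k) (= (p,k)), a list of intervals *)
Definition subdiv := Pc -> K -> seq (R * R).

Definition subdivide (S : subdiv) (p : Pc) (k : K) (l : nat) : subdiv :=
  fun p' k' => if (p' == p) && (k' == k) then split_interval l (S p k)
               else S p' k'.

(* Dist p k t theta = dist(b_{p}(t,theta), o_k) *)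
Variable Dist : Pc -> K -> R -> 'cV[R]_n -> R.

Definition energy (O : 'cV[R]_n -> R) (P : R -> R) (mu d0 : R) (S : subdiv)
  (theta : 'cV[R]_n) : R :=
  O theta + mu * \sum_(p : Pc) \sum_(k : K) \sum_(iv <- S p k)
                   width iv * P (Dist p k (mid iv) theta - d0).

Definition psi (L1 L2 eta x : R) : R := L1 * x / 2 + L2 * x `^ eta.

(* the tuple (i,j,k,l) = (p,k,l) witnesses failure of the safety check *)
Definition violates (d0 L1 L2 eta : R) (S : subdiv) (theta : 'cV[R]_n)
  (p : Pc) (k : K) (l : nat) : Prop :=
  (l < size (S p k))%N /\
  Dist p k (mid (nth (0, 0) (S p k) l)) theta
    <= d0 + psi L1 L2 eta (width (nth (0, 0) (S p k) l)).

(* theta passes the safety check (Algorithm 2 returns None) under S *)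
Definition passes (d0 L1 L2 eta : R) (S : subdiv) (theta : 'cV[R]_n) : Prop :=
  ~ exists p k l, violates d0 L1 L2 eta S theta p k l.

Definition direction (newton : bool) (M : 'M[R]_n -> 'M[R]_n)
  (f : 'cV[R]_n -> R) (theta : 'cV[R]_n) : 'cV[R]_n :=
  let d1 := - grad f theta in
  if newton then invmx (M (hess f theta)) *m d1 else d1.

Definition wolfe (c : R) (f : 'cV[R]_n -> R) (theta d : 'cV[R]_n) (alpha : R) :=
  f (theta + alpha *: d) <= f theta + c * inner (alpha *: d) (grad f theta).

Record ls_state := LSState {
  ls_S : subdiv; ls_alpha : R; ls_eps : R; ls_d : 'cV[R]_n }.

Section Step.
Variables (O : 'cV[R]_n -> R) (P : R -> R) (mu d0 L1 L2 eta c gamma : R)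
          (newton : bool) (M : 'M[R]_n -> 'M[R]_n) (theta : 'cV[R]_n).

Let E S := energy O P mu d0 S.
Let trial (s : ls_state) := theta + ls_alpha s *: ls_d s.

(* one loop iteration of Algorithm 3 that calls subdivision *)
Definition ls_sub_step (s s' : ls_state) : Prop :=
  exists p k l,
    violates d0 L1 L2 eta (ls_S s) (trial s) p k l /\
    ls_alpha s <= ls_eps s /\
    let S' := subdivide (ls_S s) p k l in
    s' = LSState S' (ls_alpha s) (gamma * ls_eps s)
                 (direction newton M (E S') theta).

Definition ls_shrink_step (s s' : ls_state) : Prop :=
  ((exists p k l, violates d0 L1 L2 eta (ls_S s) (trial s) p k l) /\
     ls_eps s < ls_alpha s
   \/ passes d0 L1 L2 eta (ls_S s) (trial s) /\
      ~ wolfe c (E (ls_S s)) theta (ls_d s) (ls_alpha s)) /\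
  s' = LSState (ls_S s) (gamma * ls_alpha s) (ls_eps s) (ls_d s).

Definition ls_step (s s' : ls_state) : Prop :=
  ls_sub_step s s' \/ ls_shrink_step s s'.

(* an infinite (non-terminating) execution of the while loop of
   Line-Search(theta, d_in, eps_in) started from subdivision S0 *)
Definition ls_run (alpha0 : R) (S0 : subdiv) (d_in : 'cV[R]_n) (eps_in : R)
  (run : nat -> ls_state) : Prop :=
  run 0%N = LSState S0 alpha0 eps_in d_in /\
  forall m, ls_step (run m) (run m.+1).

Definition infinitely_many_subdivisions (run : nat -> ls_state) : Prop :=
  forall N, exists m, (N <= m)%N /\ ls_sub_step (run m) (run m.+1).

End Step.
End Pieces.
End Defs.

(* Main.v *)
Require Import Defs.
From HB Require Import structures.
From mathcomp Require Import all_boot all_order all_algebra.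
From mathcomp Require Import all_classical all_reals all_analysis.
From mathcomp Require Import zify ring lra.
Import Order.TTheory GRing.Theory Num.Theory.
Import numFieldNormedType.Exports.
Local Open Scope classical_set_scope.
Local Open Scope ring_scope.

Section Aux.
Variable R : realType.

Lemma seq_lb (T : eqType) (Q : T -> R -> Prop) (s : seq T) :
  (forall x e e', 0 < e' -> e' <= e -> Q x e -> Q x e') ->
  (forall x, x \in s -> exists e, 0 < e /\ Q x e) ->
  exists e, 0 < e /\ forall x, x \in s -> Q x e.
Proof.
move=> Hmon; elim: s => [|y s IH] H; first by exists 1; split.
have [e1 [e1p Hy]] := H y (mem_head _ _).
have [e2 [e2p Hs]] : exists e, 0 < e /\ forall x, x \in s -> Q x e.
  by apply: IH => x xs; apply: H; rewrite in_cons xs orbT.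
have mp : 0 < Num.min e1 e2 by rewrite lt_min e1p e2p.
exists (Num.min e1 e2); split => // x; rewrite in_cons => /orP [/eqP->|xs].
  by apply: Hmon _ _ _ mp _ Hy; rewrite ge_min lexx.
by apply: Hmon _ _ _ mp _ (Hs x xs); rewrite ge_min lexx orbT.
Qed.

Lemma seq_ub (T : eqType) (Q : T -> R -> Prop) (s : seq T) :
  (forall x e e', e <= e' -> Q x e -> Q x e') ->
  (forall x, x \in s -> exists e, Q x e) ->
  exists e, forall x, x \in s -> Q x e.
Proof.
move=> Hmon; elim: s => [|y s IH] H; first by exists 1.
have [e1 Hy] := H y (mem_head _ _).
have [e2 Hs] : exists e, forall x, x \in s -> Q x e.
  by apply: IH => x xs; apply: H; rewrite in_cons xs orbT.
exists (Num.max e1 e2) => x; rewrite in_cons => /orP [/eqP->|xs].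
  by apply: Hmon _ _ _ _ Hy; rewrite le_max lexx.
by apply: Hmon _ _ _ _ (Hs x xs); rewrite le_max lexx orbT.
Qed.

Lemma fin_lb (F : finType) (Q : F -> R -> Prop) :
  (forall x e e', 0 < e' -> e' <= e -> Q x e -> Q x e') ->
  (forall x, exists e, 0 < e /\ Q x e) ->
  exists e, 0 < e /\ forall x, Q x e.
Proof.
move=> Hmon H; have [e [ep He]] := @seq_lb _ Q (enum F) Hmon (fun x _ => H x).
by exists e; split => // x; apply: He; rewrite mem_enum.
Qed.

Lemma fin_ub (F : finType) (Q : F -> R -> Prop) :
  (forall x e e', e <= e' -> Q x e -> Q x e') ->
  (forall x, exists e, Q x e) ->
  exists e, forall x, Q x e.
Proof.
move=> Hmon H; have [e He] := @seq_ub _ Q (enum F) Hmon (fun x _ => H x).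
by exists e => x; apply: He; rewrite mem_enum.
Qed.

Local Notation x0 := ((0 : R), (0 : R)).

Lemma part_lo T s : is_partition T s ->
  forall l, (l < size s)%N -> 0 <= (nth x0 s l).1.
Proof.
case=> _ Hh _ Hlt Hlink; elim=> [|l IH] Hl.
  by rewrite nth0 Hh.
have Hl' : (l < size s)%N by lia.
rewrite -Hlink //; apply: le_trans (IH Hl') _; exact: ltW (Hlt _ Hl').
Qed.

Lemma part_hi T s : is_partition T s ->
  forall l, (l < size s)%N -> (nth x0 s l).2 <= T.
Proof.
case=> Hne _ Hl Hlt Hlink.
suff H : forall j l, (l + j = (size s).-1)%N -> (nth x0 s l).2 <= T.
  by move=> l ls; apply: (H ((size s).-1 - l)%N); lia.
elim=> [|j IH] l Hj.
  rewrite addn0 in Hj; rewrite Hj nth_last Hl //.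
have Hs : (l.+1 < size s)%N by move: Hne; case: s Hj {Hl Hlt Hlink IH} => //= ? ? ? _; lia.
rewrite Hlink //; apply: le_trans (IH l.+1 _); [exact: ltW (Hlt _ Hs)| lia].
Qed.

Lemma part_cover T s t : is_partition T s -> 0 <= t <= T ->
  exists2 l, (l < size s)%N & (nth x0 s l).1 <= t <= (nth x0 s l).2.
Proof.
move=> Hp; have [Hne Hh Hl Hlt Hlink] := Hp; move=> /andP [t0 tT].
have Hsz : (0 < size s)%N by case: s Hne {Hh Hl Hlt Hlink Hp}.
suff H : forall l, (l < size s)%N ->
   (exists2 l', (l' < size s)%N & (nth x0 s l').1 <= t <= (nth x0 s l').2)
   \/ (nth x0 s l).2 < t.
  case: (H (size s).-1 _); [lia | by [] |].
  by rewrite nth_last Hl => /(le_lt_trans tT); rewrite ltxx.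
elim=> [|l IH] Hls.
  case: (leP t (nth x0 s 0).2) => Ht; last by right.
  by left; exists 0%N => //; rewrite Ht andbT nth0 Hh.
case: (IH _) => [|H|H]; [lia| by left|].
case: (leP t (nth x0 s l.+1).2) => Ht; last by right.
by left; exists l.+1 => //; rewrite Ht andbT -Hlink // ltW.
Qed.

Lemma part_mem (T : R) (s : seq (R * R)) (iv : R * R) : is_partition T s -> iv \in s ->
  0 <= iv.1 /\ iv.1 < iv.2 /\ iv.2 <= T.
Proof.
move=> Hp /(nthP x0) [l ls <-]; have [_ _ _ Hlt _] := Hp.
by split; [exact: part_lo Hp l ls | split; [exact: Hlt | exact: part_hi Hp l ls]].
Qed.

Lemma chain_sum (s : seq (R * R)) : s != [::] ->
  (forall l, (l.+1 < size s)%N -> (nth x0 s l).2 = (nth x0 s l.+1).1) ->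
  \sum_(iv <- s) width iv = (last x0 s).2 - (head x0 s).1.
Proof.
elim: s => [//|x s IH] _ Hlink.
case: s IH Hlink => [|y s] IH Hlink.
  by rewrite big_cons big_nil addr0.
rewrite big_cons IH // => [|l Hl]; last by apply: (Hlink l.+1).
have := Hlink 0%N erefl => /= H0; rewrite /width /= H0 /=. lra.
Qed.

Lemma part_sum (T : R) (s : seq (R * R)) : is_partition T s -> \sum_(iv <- s) width iv = T.
Proof.
case=> Hne Hh Hl _ Hlink; rewrite chain_sum // Hl Hh subr0 //.
Qed.

Arguments part_lo {T s}. Arguments part_hi {T s}. Arguments part_cover {T s t}.
Arguments part_mem {T s iv}. Arguments part_sum {T s}.

Lemma nth_split (s : seq (R * R)) l i : (l < size s)%N ->
  nth x0 (split_interval l s) i =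
  if (i < l)%N then nth x0 s i
  else if i == l then ((nth x0 s l).1, mid (nth x0 s l))
  else if i == l.+1 then (mid (nth x0 s l), (nth x0 s l).2)
  else nth x0 s i.-1.
Proof.
move=> ls; rewrite /split_interval nth_cat size_take ls.
case: ltnP => il; first by rewrite nth_take.
rewrite /=; case: eqP => [->|/eqP ne]; first by rewrite subnn.
case: eqP => [->|/eqP ne2]; first by rewrite subSnn.
have -> : (i - l = (i - l - 2).+2)%N by lia.
by rewrite /= nth_drop; congr nth; lia.
Qed.

Lemma size_split (s : seq (R * R)) l : (l < size s)%N ->
  size (split_interval l s) = (size s).+1.
Proof.
move=> ls; rewrite /split_interval !size_cat size_take ls /= size_drop; lia.
Qed.

Lemma mid_bounds (iv : R * R) : iv.1 < iv.2 -> iv.1 < mid iv < iv.2.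
Proof. by case: iv => a b /= h; rewrite /mid /=; apply/andP; split; lra. Qed.

Lemma part_split (T : R) (s : seq (R * R)) l : is_partition T s -> (l < size s)%N ->
  is_partition T (split_interval l s).
Proof.
move=> Hp ls; have [Hne Hh Hl Hlt Hlink] := Hp.
have := mid_bounds _ (Hlt l ls) => /andP [m1 m2].
split.
- by rewrite -size_eq0 size_split.
- rewrite -nth0 nth_split //; case: l ls {m1 m2} => [|l] ls /=.
    by rewrite nth0.
  by rewrite nth0.
- rewrite -nth_last size_split // nth_split //=.
  have -> : (size s < l)%N = false by lia.
  case: eqP => [E|_]; first by lia.
  case: eqP => [E|_].
    by rewrite /= -Hl -nth_last (_ : l = (size s).-1) //; lia.
  by rewrite nth_last.
- move=> i; rewrite size_split // => isz; rewrite nth_split //.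
  case: ltnP => il; first by apply: Hlt; lia.
  case: eqP => [_|ne]; first by [].
  case: eqP => [_|ne2]; first by [].
  by apply: Hlt; lia.
- move=> i; rewrite size_split // => isz; rewrite !nth_split //.
  case: (ltnP i.+1 l) => il.
    by rewrite ltnW //; apply: Hlink; lia.
  case: (ltnP i l) => il2.
    have -> : l = i.+1 by lia.
    by rewrite eqxx /=; apply: Hlink; lia.
  case: eqP => [->|ne].
    have -> : (l.+1 == l) = false by apply/eqP; lia.
    by rewrite eqxx.
  case: eqP => [->|ne2].
    have -> : (l.+2 == l) = false by apply/eqP; lia.
    have -> : (l.+2 == l.+1) = false by apply/eqP; lia.
    by apply: Hlink; lia.
  have -> : (i.+1 == l) = false by apply/eqP; lia.
  have -> : (i.+1 == l.+1) = false by apply/eqP; lia.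
  have -> : i = (i.-1).+1 by lia.
  by rewrite /=; apply: Hlink; lia.
Qed.

Lemma part_subdivide (Pc K : finType) T (S : subdiv R Pc K) p k l :
  (forall p k, is_partition (T : R) (S p k)) -> (l < size (S p k))%N ->
  forall p' k', is_partition T (subdivide S p k l p' k').
Proof.
move=> HS ls p' k'; rewrite /subdivide.
by case: andP => _; [exact: part_split | exact: HS].
Qed.

Arguments mid_bounds {iv}. Arguments part_split {T s l}.

Definition phi (w x : R) : R := if x < w then 0 else 2 * x / w - 1.

Lemma phi_ge0 w x : 0 < w -> 0 <= phi w x.
Proof.
move=> w0; rewrite /phi; case: ifP => // /negbT; rewrite -leNgt => h.
have -> : 2 * x / w - 1 = (2 * x - w) / w by field; lra.
apply: divr_ge0; lra.
Qed.

Lemma phi_split w x : 0 < w -> 2 * phi w (x / 2) + (if w <= x then 1 else 0) <= phi w x.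
Proof.
move=> w0; rewrite /phi.
have E : 2 * x / w = 2 * (x / w) by rewrite mulrA.
have E2 : 2 * (x / 2) / w = x / w by field; lra.
rewrite E E2.
have H1 : (w <= x) = (1 <= x / w) by rewrite ler_pdivlMr // mul1r.
have H2 : (x / 2 < w) = (x / w < 2) by rewrite ltr_pdivrMr // mulrC -ltr_pdivrMr // mulrC.
have H3 : (x < w) = (x / w < 1) by rewrite ltr_pdivrMr // mul1r.
rewrite H1 H2 H3; set y := x / w.
case: (ltP y 2) => h1; case: (ltP y 1) => h2; case: (leP 1 y) => h3; lra.
Qed.

Definition Psi (Pc K : finType) (w : R) (S : subdiv R Pc K) : R :=
  \sum_p \sum_k \sum_(iv <- S p k) phi w (width iv).
Arguments Psi {Pc K}.

Lemma Psi_ge0 (Pc K : finType) w (S : subdiv R Pc K) : 0 < w -> 0 <= Psi w S.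
Proof.
move=> w0; rewrite /Psi; apply: sumr_ge0 => p _; apply: sumr_ge0 => k _.
by apply: sumr_ge0 => iv _; exact: phi_ge0.
Qed.

Lemma sum_split (f : R -> R) (s : seq (R * R)) l : (l < size s)%N ->
  \sum_(iv <- split_interval l s) f (width iv) =
  \sum_(iv <- s) f (width iv) - f (width (nth x0 s l))
    + 2 * f (width (nth x0 s l) / 2).
Proof.
move=> ls.
have Es : s = take l s ++ nth x0 s l :: drop l.+1 s by rewrite -drop_nth // cat_take_drop.
rewrite {2}Es /split_interval !big_cat !big_cons big_nil /=.
have E1 : width ((nth x0 s l).1, mid (nth x0 s l)) = width (nth x0 s l) / 2.
  by rewrite /width /mid /=; field.
have E2 : width (mid (nth x0 s l), (nth x0 s l).2) = width (nth x0 s l) / 2.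
  by rewrite /width /mid /=; field.
rewrite E1 E2; lra.
Qed.

Lemma sum2_le (Pc K : finType) (f f' : Pc -> K -> R) p k c :
  (forall p' k', f' p' k' <= f p' k') -> f' p k <= f p k - c ->
  \sum_p' \sum_k' f' p' k' <= \sum_p' \sum_k' f p' k' - c.
Proof.
move=> H1 H2.
rewrite [X in X <= _](bigD1 p) //= [X in _ <= X - _](bigD1 p) //=.
rewrite [X in X + _ <= _](bigD1 k) //= [X in _ <= X + _ - _](bigD1 k) //=.
have A : \sum_(p' | p' != p) \sum_k' f' p' k' <= \sum_(p' | p' != p) \sum_k' f p' k'.
  by apply: ler_sum => p' _; apply: ler_sum => k' _.
have B : \sum_(k' | k' != k) f' p k' <= \sum_(k' | k' != k) f p k'.
  by apply: ler_sum => k' _.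
lra.
Qed.

Lemma Psi_subdivide (Pc K : finType) w (S : subdiv R Pc K) p k l :
  0 < w -> (l < size (S p k))%N ->
  Psi w (subdivide S p k l) <=
    Psi w S - (if w <= width (nth x0 (S p k) l) then 1 else 0).
Proof.
move=> w0 ls; rewrite /Psi; apply: (@sum2_le _ _ _ _ p k) => [p1 k1|].
  rewrite /subdivide; case: andP => [[/eqP -> /eqP ->]|_] //.
  rewrite sum_split //; have := @phi_split w (width (nth x0 (S p k) l)) w0.
  case: ifP => _; lra.
rewrite /subdivide !eqxx /= sum_split //.
have := @phi_split w (width (nth x0 (S p k) l)) w0; case: ifP => _; lra.
Qed.


Lemma line_derive (V : normedModType R) (f : V -> R) a v :
  'D_v f a = 'D_1 (fun h : R => f (a + h *: v)) 0 /\
  (derivable f a v <-> derivable (fun h : R => f (a + h *: v)) 0 1).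
Proof.
have E : (fun h : R => h^-1 *: ((f \o shift a) (h *: v) - f a)) =
   (fun h : R => h^-1 *: (((fun h : R => f (a + h *: v)) \o shift 0) (h *: 1) - (fun h : R => f (a + h *: v)) 0)).
  apply: funext => h /=; rewrite addr0 scale0r addr0.
  have H1 : h%:A = h by rewrite /GRing.scale /= mulr1.
  by rewrite H1 (addrC a).
by rewrite /derive /derivable E.
Qed.

Lemma is_derive_line (V : normedModType R) (f : V -> R) a v (D : R) :
  is_derive (0 : R) 1 (fun h : R => f (a + h *: v)) D -> 'D_v f a = D.
Proof. by move=> H; rewrite (line_derive _ f a v).1; exact: derive_val. Qed.
Arguments is_derive_line {V f a v D}.

Lemma pair_line (n : nat) (G : R * 'cV[R]_n -> R) t th v (h : R) :
   G ((t, th) + h *: (0, v)) = G (t, th + h *: v).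
Proof. by congr G; congr (_, _) => /=; rewrite scaler0 addr0. Qed.

Lemma sum_deriv_bound (T : eqType) (r : seq T) (f : T -> R -> R) (c : T -> R) :
  (forall x, x \in r -> exists D, is_derive (0 : R) 1 (f x) D /\ `|D| <= c x) ->
  exists D, is_derive (0 : R) 1 (fun h => \sum_(x <- r) f x h) D /\
            `|D| <= \sum_(x <- r) c x.
Proof.
elim: r => [|y r IH] H.
  exists 0; split; last by rewrite big_nil normr0.
  have -> : (fun h => \sum_(x <- [::]) f x h) = cst 0.
    by apply: funext => h; rewrite big_nil.
  exact: is_derive_cst.
have [D1 [H1 B1]] := H y (mem_head _ _).
have [D2 [H2 B2]] : exists D, is_derive (0 : R) 1 (fun h => \sum_(x <- r) f x h) D /\
            `|D| <= \sum_(x <- r) c x.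
  by apply: IH => x xr; apply: H; rewrite in_cons xr orbT.
exists (D1 + D2); split.
  have -> : (fun h => \sum_(x <- y :: r) f x h) = f y + (fun h => \sum_(x <- r) f x h).
    by apply: funext => h; rewrite big_cons.
  exact: is_deriveD.
rewrite big_cons; apply: le_trans (ler_normD _ _) _; exact: lerD.
Qed.

Lemma energy_deriv (Pc K : finType) (n : nat) (Dist : Pc -> K -> R -> 'cV[R]_n -> R)
  (O : 'cV[R]_n -> R) (P : R -> R) (mu d0 T C : R) (th e : 'cV[R]_n) :
  0 <= mu -> derivable O th e ->
  (forall p k t, 0 <= t <= T -> exists D,
      is_derive (0 : R) 1 (fun h : R => P (Dist p k t (th + h *: e) - d0)) D /\ `|D| <= C) ->
  forall S : subdiv R Pc K, (forall p k, is_partition T (S p k)) ->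
  `|'D_e (energy Dist O P mu d0 S) th| <=
     `|'D_e O th| + mu * \sum_(p : Pc) \sum_(k : K) (T * C).
Proof.
move=> mu0 HO HD S HS.
have [DP [HDP BP]] : exists D, is_derive (0 : R) 1 (fun h : R =>
   \sum_(p : Pc) \sum_(k : K) \sum_(iv <- S p k)
      width iv * P (Dist p k (mid iv) (th + h *: e) - d0)) D /\
   `|D| <= \sum_(p : Pc) \sum_(k : K) (T * C).
  apply: sum_deriv_bound => p _.
  apply: sum_deriv_bound => k _.
  rewrite -(part_sum (HS p k)) mulr_suml.
  apply: sum_deriv_bound => iv ivs.
  have [a0 [ab bT]] := part_mem (HS p k) ivs.
  have := mid_bounds ab => /andP [m1 m2].
  have [D [HD1 HD2]] := HD p k (mid iv) ltac:(apply/andP; split; lra).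
  exists (width iv *: D); split.
    exact: (is_deriveZ (width iv) HD1).
  rewrite normrM ger0_norm; last by rewrite /width; lra.
  by apply: ler_wpM2l => //; rewrite /width; lra.
have HO' := derivableP ((line_derive _ O th e).2.1 HO).
have Hall : is_derive (0 : R) 1
   (fun h : R => energy Dist O P mu d0 S (th + h *: e))
   ('D_1 (fun h : R => O (th + h *: e)) 0 + mu *: DP).
  have -> : (fun h : R => energy Dist O P mu d0 S (th + h *: e)) =
     (fun h : R => O (th + h *: e)) + mu \*: (fun h : R =>
       \sum_(p : Pc) \sum_(k : K) \sum_(iv <- S p k)
         width iv * P (Dist p k (mid iv) (th + h *: e) - d0)).
    by apply: funext => h.
  apply: is_deriveD => //; exact: is_deriveZ.
rewrite (is_derive_line Hall) -(line_derive _ O th e).1.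
apply: le_trans (ler_normD _ _) _; apply: lerD => //.
rewrite normrZ ger0_norm //; exact: ler_wpM2l.
Qed.


Lemma inner_ge0 n (x : 'cV[R]_n) : 0 <= inner x x.
Proof. by apply: sumr_ge0 => i _; rewrite -expr2 sqr_ge0. Qed.

Lemma inner_sq n (x : 'cV[R]_n) i : x i 0 ^+ 2 <= inner x x.
Proof.
rewrite /inner (bigD1 i) //= expr2 lerDl; apply: sumr_ge0 => j _.
by rewrite -expr2 sqr_ge0.
Qed.

Lemma inner0r n (x : 'cV[R]_n) : inner x 0 = 0.
Proof. by rewrite /inner big1 // => i _; rewrite mxE mulr0. Qed.

Arguments inner_sq {n}. Arguments inner_ge0 {n}. Arguments inner0r {n}.

Lemma cV_norm_le n (v : 'cV[R]_n) B : 0 <= B -> (forall i, `|v i 0| <= B) -> `|v| <= B.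
Proof.
move=> B0 H; rewrite [`|v|]mx_normrE; elim/big_ind: _ => //.
  by move=> a b Ha Hb; rewrite ge_max Ha Hb.
by move=> [i j] _ /=; rewrite (ord1 j).
Qed.

Lemma newton_bound n (A : 'M[R]_n) lo (x : 'cV[R]_n) B :
  0 < lo -> (forall y, lo * inner y y <= inner y (A *m y)) -> A^T = A ->
  0 <= B -> (forall i, `|x i 0| <= B) ->
  forall i, `|(invmx A *m x) i 0| <= (n%:R + 1) * B / lo.
Proof.
move=> lo0 HA HT B0 Hx i.
have Au : A \in unitmx.
  rewrite unitmxE unitfE; apply/negP => /det0P [v vn0 vA].
  have AvT : A *m v^T = 0 by rewrite -HT -trmx_mul vA trmx0.
  have := HA v^T; rewrite AvT inner0r => H.
  have Hy : inner v^T v^T <= 0.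
    by rewrite -(pmulr_rle0 _ lo0).
  move/negP: vn0; apply; apply/eqP/matrixP => a j.
  rewrite (ord1 a) mxE.
  have := inner_sq v^T j; rewrite mxE => Hj.
  have : v 0 j ^+ 2 = 0 by apply/eqP; rewrite eq_le sqr_ge0 andbT (le_trans Hj Hy).
  by move/eqP; rewrite sqrf_eq0 => /eqP.
set y := invmx A *m x.
have Ay : A *m y = x by rewrite /y mulKVmx.
have I1 : lo * inner y y <= inner y x by rewrite -[in inner y x]Ay.
have I2 : 2 * lo * inner y x <= lo ^+ 2 * inner y y + inner x x.
  rewrite /inner !mulr_sumr -big_split /=; apply: ler_sum => j _.
  have := sqr_ge0 (lo * y j 0 - x j 0); rewrite -subr_ge0.
  set a := y j 0; set b := x j 0.
  have -> : lo ^+ 2 * (a * a) + b * b - 2 * lo * (a * b) = (lo * a - b) ^+ 2 by ring.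
  by [].
have I3 : inner x x <= n%:R * B ^+ 2.
  have -> : n%:R * B ^+ 2 = \sum_(j < n) B ^+ 2 by rewrite sumr_const card_ord mulr_natl.
  apply: ler_sum => j _.
  have := Hx j; have := ler_norm (x j 0 * x j 0); rewrite normrM expr2 => h1 h2.
  by apply: le_trans h1 _; apply: ler_pM.
have Yi := inner_sq y i.
have Y0 := inner_ge0 y.
have Hn : 0 <= n%:R :> R by [].
have K1 : (lo * `|y i 0|) ^+ 2 <= ((n%:R + 1) * B) ^+ 2.
  rewrite exprMn real_normK ?num_real //; nra.
have K2 : lo * `|y i 0| <= (n%:R + 1) * B.
  have : 0 <= lo * `|y i 0| by rewrite mulr_ge0 // ltW.
  have : 0 <= (n%:R + 1) * B by rewrite mulr_ge0 // addr_ge0.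
  nra.
by rewrite ler_pdivlMr // mulrC.
Qed.

Arguments newton_bound {n A lo x B}.

Lemma grad_entry n (f : 'cV[R]_n -> R) th i :
  grad f th i 0 = 'D_(delta_mx i 0) f th.
Proof. by rewrite /grad mxE. Qed.

Lemma dir_bound n newton (M : 'M[R]_n -> 'M[R]_n) lo hi f th B :
  0 < lo -> loewner_bounded lo hi M -> 0 <= B ->
  (forall i, `|'D_(delta_mx i 0) f th| <= B) ->
  `|direction newton M f th| <= (n%:R + 1) * B / lo + B.
Proof.
move=> lo0 HM B0 HB.
have Hd1 : forall i, `|(- grad f th) i 0| <= B.
  by move=> i; rewrite mxE normrN grad_entry.
have C0 : 0 <= (n%:R + 1) * B / lo by rewrite divr_ge0 ?mulr_ge0 ?addr_ge0 // ltW.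
apply: cV_norm_le; first by rewrite addr_ge0.
move=> i; rewrite /direction; case: newton.
  have [HT HMx] := HM (hess f th).
  have := newton_bound lo0 (fun y => (andP (HMx y)).1) HT B0 Hd1 i.
  move=> h; apply: le_trans h _; rewrite lerDl //.
by apply: le_trans (Hd1 i) _; rewrite lerDr.
Qed.


Lemma cont_sec (n : nat) (G : R * 'cV[R]_n -> R) (HG : continuous G) t :
  continuous (fun th => G (t, th)).
Proof.
move=> th. apply: (@continuous_comp _ _ _ (fun th => (t, th)) G); last exact: HG.
apply: (@cvg_pair _ _ _ (nbhs th) (nbhs t) (nbhs th) _ _ _ (fun=> t) id); [exact: cvg_cst| exact: cvg_id].
Qed.

Lemma cont_sec2 (n : nat) (G : R * 'cV[R]_n -> R) (HG : continuous G) th :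
  continuous (fun t => G (t, th)).
Proof.
move=> t. apply: (@continuous_comp _ _ _ (fun t => (t, th)) G); last exact: HG.
apply: (@cvg_pair _ _ _ (nbhs t) (nbhs t) (nbhs th) _ _ _ id (fun=> th)); [exact: cvg_id| exact: cvg_cst].
Qed.

Lemma grid_cover (N : nat) (h t : R) : 0 < h -> 0 <= t <= N%:R * h ->
  exists j, (j <= N)%N /\ `|t - j%:R * h| <= h.
Proof.
move=> h0; elim: N t => [|N IH] t /andP [t0 tN].
  exists 0%N; split => //; rewrite mul0r subr0 ger0_norm //.
  by rewrite mul0r in tN; apply: le_trans tN (ltW h0).
case: (leP t (N%:R * h)) => Ht.
  have [j [jN Hj]] := IH t ltac:(by rewrite t0 Ht).
  by exists j; split => //; apply: leq_trans jN _.
exists N.+1; split => //; rewrite -natr1 in tN *.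
rewrite ler_norml; apply/andP; split; nra.
Qed.

Lemma tube (Pc K : finType) n (g : Pc -> K -> R -> 'cV[R]_n -> R) (T L1 d0 dl : R) th :
  0 < T -> 0 <= L1 -> 0 < dl ->
  (forall p k th' t1 t2, 0 <= t1 <= T -> 0 <= t2 <= T ->
     `|g p k t1 th' - g p k t2 th'| <= L1 * `|t1 - t2|) ->
  (forall p k t, continuous (fun th' => g p k t th')) ->
  (forall p k t, 0 <= t <= T -> d0 + dl < g p k t th) ->
  exists2 r, 0 < r & forall th', `|th - th'| < r ->
     forall p k t, 0 <= t <= T -> d0 + dl / 2 < g p k t th'.
Proof.
move=> T0 L0 dl0 HL Hc Hm.
have A0 : 0 <= 4 * L1 * T / dl by rewrite divr_ge0 ?mulr_ge0 // ltW.
set N := Num.Def.archi_bound (4 * L1 * T / dl).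
have HN := archi_boundP A0; rewrite -/N in HN.
set h := T / N.+1%:R.
have Np : 0 < N.+1%:R :> R by rewrite ltr0n.
have h0 : 0 < h by rewrite divr_gt0.
have hT : N.+1%:R * h = T by rewrite /h mulrC divfK // gt_eqF.
have Lh : L1 * h <= dl / 4.
  have : 4 * L1 * T <= dl * N.+1%:R.
    rewrite -natr1; move: HN; rewrite ltr_pdivrMr // => HN; nra.
  move=> H; rewrite /h mulrA ler_pdivrMr //.
  have -> : dl / 4 * N.+1%:R = (dl * N.+1%:R) / 4 by rewrite mulrAC.
  rewrite ler_pdivlMr //; lra.
pose tj (j : 'I_N.+2) : R := (j : nat)%:R * h.
have tjT : forall j : 'I_N.+2, 0 <= tj j <= T.
  move=> j; apply/andP; split; first by rewrite /tj mulr_ge0 // ltW.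
  rewrite /tj -hT ler_wpM2r ?(ltW h0) // ler_nat -ltnS; exact: ltn_ord.
have Hn : \forall th' \near th, forall x : Pc * K * 'I_N.+2,
    `|g x.1.1 x.1.2 (tj x.2) th - g x.1.1 x.1.2 (tj x.2) th'| < dl / 4.
  apply: (@filter_forall _ (Pc * K * 'I_N.+2)%type (fun x th' =>
    `|g x.1.1 x.1.2 (tj x.2) th - g x.1.1 x.1.2 (tj x.2) th'| < dl / 4) (nbhs th) _) => -[[p k] j].
  have := Hc p k (tj j) th.
  move/cvgrPdist_lt => H; apply: H; lra.
have [r r0 Hr] := (nbhs_normP _ _).1 Hn.
exists r => // th' Hth' p k t /andP [t0 tT].
have := Hr th' Hth' => /= Hall.
have [j [jN Hj]] := @grid_cover N.+1 h t h0 ltac:(by rewrite t0 hT).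
have jlt : (j < N.+2)%N by [].
have := Hall ((p, k), Ordinal jlt) => /= H1.
have := Hm p k (tj (Ordinal jlt)) (tjT _) => H2.
have := HL p k th' t (tj (Ordinal jlt)) ltac:(by rewrite t0) (tjT _) => H3.
rewrite /tj /= in H1 H2 H3.
have H4 : L1 * `|t - j%:R * h| <= L1 * h by apply: ler_wpM2l.
move: H1 H2 H3 H4; set a := g p k _ th; set b := g p k _ th'; set c := g p k t th'.
move=> H1 H2 H3 H4.
have := ler_norm (b - c); rewrite distrC => H5.
have := ler_norm (a - b) => H6.
lra.
Qed.

Lemma psi_small (L1 L2 eta dl : R) : 0 <= L1 -> 0 < L2 -> 0 < eta -> 0 < dl ->
  exists2 w, 0 < w & forall x, 0 < x -> x < w -> psi L1 L2 eta x < dl / 2.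
Proof.
move=> L0 L20 e0 dl0.
set w1 := dl / (4 * (L1 + 1)).
set w2 := (dl / (8 * L2)) `^ (eta^-1).
have w10 : 0 < w1 by rewrite divr_gt0 // mulr_gt0 //; lra.
have b0 : 0 < dl / (8 * L2) by rewrite divr_gt0 // mulr_gt0 //; lra.
have w20 : 0 < w2 by apply: powR_gt0.
have Hw1 : L1 * w1 <= dl / 4.
  have -> : dl / 4 = (L1 + 1) * w1 by rewrite /w1; field; lra.
  by rewrite ler_wpM2r ?ltW //; lra.
have Hw2 : w2 `^ eta = dl / (8 * L2).
  by rewrite /w2 -powRrM mulVf ?gt_eqF // powRr1 // ltW.
exists (Num.min w1 w2); first by rewrite lt_min w10 w20.
move=> x x0; rewrite lt_min => /andP [xw1 xw2].
rewrite /psi.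
have A1 : L1 * x <= L1 * w1 by apply: ler_wpM2l => //; exact: ltW.
have A2 : x `^ eta <= w2 `^ eta.
  by apply: ge0_ler_powR; rewrite ?nnegrE ?ltW.
have A3 : L2 * x `^ eta <= L2 * (dl / (8 * L2)) by rewrite -Hw2 ler_wpM2l // ltW.
have A4 : L2 * (dl / (8 * L2)) = dl / 8 by field; lra.
rewrite A4 in A3.
lra.
Qed.

End Aux.
Arguments part_lo {R T s}. Arguments part_hi {R T s}. Arguments part_cover {R T s t}.
Arguments part_mem {R T s iv}. Arguments part_sum {R T s}.
Arguments mid_bounds {R iv}. Arguments part_split {R T s l}.
Arguments inner_sq {R n}. Arguments inner_ge0 {R n}. Arguments inner0r {R n}.
Arguments newton_bound {R n A lo x B}. Arguments is_derive_line {R V f a v D}.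
Arguments line_derive {R V}.
Arguments part_subdivide {R Pc K T S p k l}. Arguments Psi_subdivide {R Pc K w S p k l}.
Arguments Psi_ge0 {R Pc K w S}. Arguments psi_small {R L1 L2 eta dl}.
Arguments tube {R Pc K n g T L1 d0 dl th}. Arguments cont_sec {R n G}.
Arguments Psi {R Pc K}.

Theorem lemma6
  (R : realType) (n : nat) (I Pc K : finType) (owner : Pc -> I)
  (* bodies b_i, their pieces b_ij (= b p), obstacles o and pieces o_k *)
  (bI : I -> R -> 'cV[R]_n -> set 'rV[R]_3)
  (b : Pc -> R -> 'cV[R]_n -> set 'rV[R]_3)
  (o : set 'rV[R]_3) (ok : K -> set 'rV[R]_3)
  (T d0 mu L1 L2 eta c gamma alpha0 lo hi : R)
  (O : 'cV[R]_n -> R) (P : R -> R) (M : 'M[R]_n -> 'M[R]_n) (newton : bool)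
  (* Assumption 1 *)
  (Hdecb : forall i t th, bI i t th = \bigcup_(p in [set p | owner p = i]) b p t th)
  (Hdeco : o = \bigcup_(k in [set: K]) ok k)
  (Hsmooth : forall p k,
      smooth (fun z : R * 'cV[R]_n => setdist (b p z.1 z.2) (ok k)))
  (* Assumption 3 *)
  (HPsmooth : smooth_pos P)
  (HPdec : forall x y, 0 < x -> x < y -> P y < P x)
  (HP0 : P x @[x --> 0^'+] --> +oo)
  (HPoo : P x @[x --> +oo] --> 0)
  (HxP0 : x * P x @[x --> 0^'+] --> +oo)
  (* standing data *)
  (HT : 0 < T) (Hd0 : 0 <= d0) (HO : twice_diff O) (Hmu : 0 < mu)
  (HL1 : forall p k th t1 t2, 0 <= t1 <= T -> 0 <= t2 <= T ->
      `|setdist (b p t1 th) (ok k) - setdist (b p t2 th) (ok k)|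
        <= L1 * `|t1 - t2|)
  (HL2 : 0 < L2) (Heta : 0 < eta)
  (HM : 0 < lo) (Hlohi : lo <= hi) (HMb : loewner_bounded lo hi M)
  (Hc : 0 < c < 1) (Hgamma : 0 < gamma < 1) (Halpha0 : 0 < alpha0)
  (* input of Line-Search *)
  (theta d_in : 'cV[R]_n) (eps_in : R) (S0 : subdiv R Pc K)
  (HS0 : forall p k, is_partition T (S0 p k))
  (run : nat -> ls_state R Pc K n)
  (Hrun : ls_run (fun p k t th => setdist (b p t th) (ok k))
            O P mu d0 L1 L2 eta c gamma newton M theta alpha0 S0 d_in eps_in run)
  (Hinf : infinitely_many_subdivisions
            (fun p k t th => setdist (b p t th) (ok k))
            O P mu d0 L1 L2 eta gamma newton M theta run) :
  forall S : subdiv R Pc K, (forall p k, is_partition T (S p k)) ->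
    ~ passes (fun p k t th => setdist (b p t th) (ok k)) d0 L1 L2 eta S theta.
Proof.
move=> S HS Hpass.
set g := (fun p k t th => setdist (b p t th) (ok k)) in Hrun Hinf Hpass.
pose G p k := fun z : R * 'cV[R]_n => setdist (b p z.1 z.2) (ok k).
have HL1' : forall p k th t1 t2, 0 <= t1 <= T -> 0 <= t2 <= T ->
   `|g p k t1 th - g p k t2 th| <= L1 * `|t1 - t2| by exact: HL1.
have [Hrun0 Hstep] := Hrun.
have [m0 [_ Hsub0]] := Hinf 0%N.
have [p0 [k0 [l0 [Hv0 _]]]] := Hsub0.
have T0 : 0 <= T by exact: ltW.
have L0 : 0 <= L1.
  have := HL1' p0 k0 theta 0 T ltac:(by rewrite lexx T0) ltac:(by rewrite lexx T0).
  rewrite sub0r normrN (gtr0_norm HT) => H.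
  have := normr_ge0 (g p0 k0 0 theta - g p0 k0 T theta); nra.
have [dl [dl0 Hm]] : exists dl, 0 < dl /\
    forall p k t, 0 <= t <= T -> d0 + dl < g p k t theta.
  have [e [e0 He]] : exists e, 0 < e /\ forall x : Pc * K,
     (fun x e => forall t, 0 <= t <= T -> d0 + e < g x.1 x.2 t theta) x e.
    apply: fin_lb => [x e e' e'0 e'e He t tT|[p k]]; first by have := He t tT; lra.
    have [e [e0 He]] : exists e, 0 < e /\ forall l : 'I_(size (S p k)),
       (fun l e => e <= L2 * (width (nth (0, 0) (S p k) l)) `^ eta) l e.
      apply: fin_lb => [l e e' _ e'e He|l]; first exact: le_trans e'e He.
      have [_ _ _ Hlt _] := HS p k.
      exists (L2 * (width (nth (0, 0) (S p k) l)) `^ eta); split => //.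
      by apply: mulr_gt0 => //; apply: powR_gt0; rewrite /width subr_gt0; exact: Hlt.
    exists e; split => // t tT /=.
  have [l ls Hl] := part_cover (HS p k) tT.
  set iv := nth (0, 0) (S p k) l in Hl *.
  have Hgt : d0 + psi L1 L2 eta (width iv) < g p k (mid iv) theta.
    rewrite ltNge; apply/negP => H; apply: Hpass; exists p, k, l; by split.
  have [_ _ _ Hlt _] := HS p k.
  have ab := Hlt l ls; rewrite -/iv in ab.
  have a0 := part_lo (HS p k) l ls; have bT := part_hi (HS p k) l ls.
  rewrite -/iv in a0 bT.
  have := mid_bounds ab => /andP [m1 m2].
  have := HL1' p k theta t (mid iv) tT ltac:(apply/andP; split; lra) => H1.
  have H2 : `|t - mid iv| <= width iv / 2.
    move: Hl => /andP [h1 h2]; rewrite ler_norml /mid /width; apply/andP; split; lra.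
  have H3 : L1 * `|t - mid iv| <= L1 * (width iv / 2) by exact: ler_wpM2l.
  have H4 := He (Ordinal ls); rewrite /= -/iv in H4.
  have H5 := ler_norm (g p k (mid iv) theta - g p k t theta); rewrite distrC in H5.
    move: Hgt; rewrite /psi -mulrA; lra.
  by exists e; split => // p k t tT; exact: (He (p, k)).
have [Gm HGm] : exists Gm, forall p k t, 0 <= t <= T -> g p k t theta <= Gm.
  have [C HC] : exists C, forall x : Pc * K,
     (fun x C => forall t, 0 <= t <= T -> g x.1 x.2 t theta <= C) x C.
    apply: fin_ub => [x e e' ee' He t tT|[p k]]; first exact: le_trans (He t tT) ee'.
    exists (g p k 0 theta + L1 * T) => t /andP [t0 tT] /=.
    have := HL1' p k theta t 0 ltac:(by rewrite t0 tT) ltac:(by rewrite lexx T0).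
    rewrite subr0 (ger0_norm t0) => H.
    have H2 : L1 * t <= L1 * T by exact: ler_wpM2l.
    have := ler_norm (g p k t theta - g p k 0 theta); lra.
  by exists C => p k t tT; exact: (HC (p, k)).
have [C1 [C10 HC1]] : exists C1, 0 <= C1 /\ forall x, dl <= x <= Gm - d0 -> `|derive1 P x| <= C1.
  have Hab : dl <= Num.max dl (Gm - d0) by rewrite le_max lexx.
  have Hcw : {within `[dl, Num.max dl (Gm - d0)], continuous (fun x => `|derive1 P x|)}.
    apply: continuous_in_subspaceT => x; rewrite inE /= in_itv /= => /andP [h _].
    apply: cvg_norm; exact: (HPsmooth 1%N x ltac:(lra)).2.
  have [cc _ Hc2] := EVT_max Hab Hcw.
  exists `|derive1 P cc|; split => // x /andP [x1 x2]; apply: Hc2.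
  by rewrite in_itv /= x1 le_max x2 orbT.
have [C2 [C20 HC2]] : exists C2, 0 <= C2 /\ forall p k (i : 'I_n) t, 0 <= t <= T ->
    `|'D_((0 : R), delta_mx i 0) (G p k) (t, theta)| <= C2.
  have [C HC] : exists C, forall x : Pc * K * 'I_n,
     (fun x C => 0 <= C /\ forall t, 0 <= t <= T ->
        `|'D_((0 : R), delta_mx x.2 0) (G x.1.1 x.1.2) (t, theta)| <= C) x C.
    apply: fin_ub => [x e e' ee' [He0 He]|[[p k] i]].
      by split; [exact: le_trans He0 ee' | move=> t tT; exact: le_trans (He t tT) ee'].
    have Hcw : {within `[0, T], continuous (fun t =>
        `|Defs.iterD (G p k) [:: ((0 : R), delta_mx i 0)] (t, theta)|)}.
      apply: continuous_subspaceT => t; apply: cvg_norm.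
      exact: (@cont_sec2 R n (Defs.iterD (G p k) [:: ((0 : R), delta_mx i 0)]) (Hsmooth p k [:: ((0 : R), delta_mx i 0)]).1 theta t).
    have [cc _ Hc2] := EVT_max T0 Hcw.
    exists `|Defs.iterD (G p k) [:: ((0 : R), delta_mx i 0)] (cc, theta)|; split; first exact: normr_ge0.
    move=> t tT; have := Hc2 t; rewrite in_itv /= => H; exact: H.
  exists (Num.max C 0); split; first by rewrite le_max lexx orbT.
  move=> p k i t tT; have [_ H] := HC (p, k, i).
  by apply: le_trans (H t tT) _; rewrite le_max lexx.
have Hterm : forall (i : 'I_n) p k t, 0 <= t <= T -> exists D,
    is_derive (0 : R) 1 (fun h : R => P (g p k t (theta + h *: delta_mx i 0) - d0)) D
    /\ `|D| <= C1 * C2.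
  move=> i p k t tT.
  set e := delta_mx i 0 : 'cV[R]_n.
  have Hd : derivable (G p k) (t, theta) ((0 : R), e).
    exact: ((Hsmooth p k [::]).2 ((0 : R), e) (t, theta)).
  have Hd1 := (line_derive (G p k) (t, theta) ((0 : R), e)).2.1 Hd.
  have Ef : (fun h : R => G p k ((t, theta) + h *: ((0 : R), e))) =
            (fun h : R => g p k t (theta + h *: e)).
    by apply: funext => h; rewrite pair_line.
  rewrite Ef in Hd1.
  have Hphi := derivableP Hd1.
  set Dg := 'D_((0 : R), e) (G p k) (t, theta).
  have EDg : 'D_1 (fun h : R => g p k t (theta + h *: e)) 0 = Dg.
    by rewrite -Ef -(line_derive (G p k) (t, theta) ((0 : R), e)).1.
  rewrite EDg in Hphi.
  have Hphi2 : is_derive (0 : R) 1 (fun h : R => g p k t (theta + h *: e) - d0) (Dg - 0).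
    have -> : (fun h : R => g p k t (theta + h *: e) - d0) =
       (fun h : R => g p k t (theta + h *: e)) - cst d0 by apply: funext.
    apply: is_deriveB => //; exact: is_derive_cst.
  set x0 := g p k t theta - d0.
  have Hx : dl <= x0 <= Gm - d0.
    have := Hm p k t tT; have := HGm p k t tT; rewrite /x0; move=> h1 h2.
    apply/andP; split; lra.
  have HPd : is_derive x0 1 P (derive1 P x0).
    rewrite derive1E; apply: derivableP.
    exact: (HPsmooth 0%N x0 ltac:(lra)).1.
  have Hx0 : x0 = g p k t (theta + 0 *: e) - d0 by rewrite scale0r addr0.
  rewrite Hx0 in HPd.
  have Hcomp := @is_derive1_comp R P (fun h : R => g p k t (theta + h *: e) - d0) 0 _ _ HPd Hphi2.
  exists (derive1 P x0 * (Dg - 0)); split.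
    by rewrite [in X in is_derive _ _ _ X]Hx0.
  rewrite subr0 normrM; apply: ler_pM => //.
    exact: HC1.
  exact: HC2.
set CO := \sum_(i < n) `|'D_(delta_mx i 0) O theta|.
set B0 := CO + mu * \sum_(p : Pc) \sum_(k : K) (T * (C1 * C2)).
have CO0 : 0 <= CO by apply: sumr_ge0.
have B00 : 0 <= B0.
  apply: addr_ge0 => //; apply: mulr_ge0; first exact: ltW.
  by apply: sumr_ge0 => p _; apply: sumr_ge0 => k _; rewrite !mulr_ge0.
set Bd := (n%:R + 1) * B0 / lo + B0.
have Hdir : forall S' : subdiv R Pc K, (forall p k, is_partition T (S' p k)) ->
    `|direction newton M (energy g O P mu d0 S') theta| <= Bd.
  move=> S' HS'; apply: (@dir_bound R n newton M lo hi _ theta B0 HM HMb B00) => i.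
  apply: le_trans (@energy_deriv R Pc K n g O P mu d0 T (C1 * C2) theta (delta_mx i 0) (ltW Hmu) (HO (delta_mx i 0) (delta_mx i 0) theta).1 (Hterm i) S' HS') _.
  apply: lerD => //; rewrite /CO (bigD1 i) //= lerDl; exact: sumr_ge0.
set Bd' := Bd + `|d_in|.
have Bd0 : 0 <= Bd.
  rewrite /Bd addr_ge0 //; apply: divr_ge0; [apply: mulr_ge0 => //; exact: addr_ge0 | exact: ltW].
have Bd'0 : 0 <= Bd' by rewrite addr_ge0.
have Inv : forall m, (forall p k, is_partition T (ls_S (run m) p k)) /\
    0 < ls_alpha (run m) /\ `|ls_d (run m)| <= Bd'.
  elim=> [|m [IH1 [IH2 IH3]]].
    rewrite Hrun0 /=; split => //; split => //; rewrite /Bd' lerDr //.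
  case: (Hstep m) => [[p [k [l [Hv [Hae Heq]]]]] | [_ Heq]]; rewrite Heq /=.
    have HS' := part_subdivide IH1 Hv.1.
    split => //; split => //.
    by apply: le_trans (Hdir _ HS') _; rewrite lerDl.
  split => //; split => //; exact: mulr_gt0 (andP Hgamma).1 IH2.
have g0 : 0 < gamma by case/andP: Hgamma.
have g1 : gamma < 1 by case/andP: Hgamma.
have Heps_in : 0 < eps_in.
  rewrite ltNge; apply/negP => He.
  have Hneg : forall m, ls_eps (run m) <= 0.
    elim=> [|m IH]; first by rewrite Hrun0.
    case: (Hstep m) => [[p [k [l [Hv [Hae Heq]]]]] | [_ Heq]]; rewrite Heq //=.
    by rewrite pmulr_rle0.
  have [_ [Ha _]] := Inv m0.
  have [p [k [l [_ [Hae _]]]]] := Hsub0.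
  have := Hneg m0; lra.
have Heps_pos : forall m, 0 < ls_eps (run m).
  elim=> [|m IH]; first by rewrite Hrun0.
  case: (Hstep m) => [[p [k [l [Hv [Hae Heq]]]]] | [_ Heq]]; rewrite Heq //=.
  exact: mulr_gt0.
have Heps_step : forall m, ls_eps (run m.+1) <= ls_eps (run m).
  move=> m; have := Heps_pos m.
  case: (Hstep m) => [[p [k [l [Hv [Hae Heq]]]]] | [_ Heq]]; rewrite Heq //= => h.
  by rewrite ger_pMl // ltW.
have Heps_mono : forall m j, ls_eps (run (m + j)%N) <= ls_eps (run m).
  move=> m; elim=> [|j IH]; first by rewrite addn0.
  by rewrite addnS; apply: le_trans (Heps_step _) IH.
have Heps_small : forall j, exists m, ls_eps (run m) <= eps_in * gamma ^+ j.
  elim=> [|j [m Hmj]]; first by exists 0%N; rewrite Hrun0 expr0 mulr1.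
  have [m' [mm' [p [k [l [Hv [Hae Heq]]]]]]] := Hinf m.
  exists m'.+1; rewrite Heq /= exprS.
  have := Heps_mono m (m' - m)%N; rewrite subnKC // => h.
  rewrite mulrCA ler_pM2l //; exact: le_trans h Hmj.
have Hcont : forall p k t, continuous (fun th' => g p k t th').
  by move=> p k t; exact: (cont_sec (Hsmooth p k [::]).1 t).
have [r r0 Htube] := tube HT L0 dl0 HL1' Hcont Hm.
have [w w0 Hw] := psi_small L0 HL2 Heta dl0.
set r' := r / (Bd' + 1).
have r'0 : 0 < r' by rewrite divr_gt0 //; lra.
have [j Hj] : exists j, eps_in * gamma ^+ j < r'.
  have : `|gamma| < 1 by rewrite gtr0_norm.
  move/cvg_expr/cvgrPdist_lt => /(_ (r' / eps_in) ltac:(exact: divr_gt0)) [N _ HN].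
  exists N; have := HN N (leqnn N); rewrite sub0r normrN => h.
  have h2 : gamma ^+ N < r' / eps_in by apply: le_lt_trans h; exact: ler_norm.
  by rewrite mulrC -ltr_pdivlMr.
have [m1 Hm1] := Heps_small j.
have Hbig : forall m, (m1 <= m)%N -> forall p k l,
    violates g d0 L1 L2 eta (ls_S (run m))
      (theta + ls_alpha (run m) *: ls_d (run m)) p k l ->
    ls_alpha (run m) <= ls_eps (run m) ->
    w <= width (nth (0, 0) (ls_S (run m) p k) l).
  move=> m mm1 p k l [ls Hv] Hae.
  rewrite leNgt; apply/negP => Hlt.
  have [Hpart [Ha Hd]] := Inv m.
  set iv := nth (0, 0) (ls_S (run m) p k) l in Hv Hlt.
  have [_ _ _ Hlt0 _] := Hpart p k.
  have ab := Hlt0 l ls; rewrite -/iv in ab.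
  have a0 := part_lo (Hpart p k) l ls; have bT := part_hi (Hpart p k) l ls.
  rewrite -/iv in a0 bT.
  have := mid_bounds ab => /andP [mi1 mi2].
  have Hem : ls_eps (run m) <= ls_eps (run m1).
    by have := Heps_mono m1 (m - m1)%N; rewrite subnKC.
  have Hclose : `|theta - (theta + ls_alpha (run m) *: ls_d (run m))| < r.
    rewrite opprD addrA subrr add0r normrN normrZ gtr0_norm //.
    have h1 : ls_alpha (run m) * `|ls_d (run m)| <= ls_eps (run m1) * Bd'.
      apply: ler_pM => //; [exact: ltW | exact: le_trans Hae Hem].
    have h2 : ls_eps (run m1) * Bd' <= r' * Bd'.
      apply: ler_wpM2r => //; apply: ltW; exact: le_lt_trans Hm1 Hj.
    have h3 : r' * (Bd' + 1) = r by rewrite /r' divfK // gt_eqF //; lra.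
    apply: le_lt_trans h1 _; apply: le_lt_trans h2 _; nra.
  have := Htube _ Hclose p k (mid iv) ltac:(apply/andP; split; lra).
  have := Hw (width iv) ltac:(rewrite /width; lra) Hlt.
  move: Hv; lra.
have Psi_step : forall m, Psi w (ls_S (run m.+1)) <= Psi w (ls_S (run m)).
  move=> m.
  case: (Hstep m) => [[p [k [l [Hv [Hae Heq]]]]] | [_ Heq]]; rewrite Heq //=.
  have := Psi_subdivide w0 Hv.1; case: ifP => _ h; lra.
have Psi_sub : forall m, (m1 <= m)%N ->
    ls_sub_step g O P mu d0 L1 L2 eta gamma newton M theta (run m) (run m.+1) ->
    Psi w (ls_S (run m.+1)) <= Psi w (ls_S (run m)) - 1.
  move=> m mm1 [p [k [l [Hv [Hae Heq]]]]]; rewrite Heq /=.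
  have := Psi_subdivide w0 Hv.1; rewrite (Hbig m mm1 p k l Hv Hae) //.
have Psi_mono : forall m j, Psi w (ls_S (run (m + j)%N)) <= Psi w (ls_S (run m)).
  move=> m; elim=> [|jj IH]; first by rewrite addn0.
  by rewrite addnS; apply: le_trans (Psi_step _) IH.
have Psi_drop : forall jj, exists m, (m1 <= m)%N /\ Psi w (ls_S (run m)) <= Psi w (ls_S (run m1)) - jj%:R.
  elim=> [|jj [m [mm Hmj]]]; first by exists m1; split => //; rewrite subr0.
  have [m' [mm' Hs]] := Hinf m.
  exists m'.+1; split; first by apply: leq_trans mm (leq_trans mm' (leqnSn _)).
  have h1 := Psi_sub m' (leq_trans mm mm') Hs.
  have := Psi_mono m (m' - m)%N; rewrite subnKC // => h2.
  rewrite -natr1; lra.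
have P0 : 0 <= Psi w (ls_S (run m1)) by exact: Psi_ge0.
have [m [_ Hlast]] := Psi_drop (Num.Def.archi_bound (Psi w (ls_S (run m1)))).
have := archi_boundP P0; have := @Psi_ge0 R Pc K w (ls_S (run m)) w0; lra.
Qed.
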